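(* Let $f:\mathbb{R}^n\to\mathbb{R}$ be continuously differentiable, $\varphi:\mathbb{R}^n\to\mathbb{R}$ convex, $\psi=f+\varphi$, and $\Lambda$ symmetric positive definite. Each of the two maps (a) $g(x)=\psi'(x;d_s(x))\,d_s(x)$ and (b) $g(x)=F^{\Lambda}_{\mathrm{nat}}(x)$ has the following property: whenever $g(x)\neq0$, there exist $r,\epsilon>0$ such that $\|g(y)\|\ge\epsilon$ for all $y\in B_r(x)$.
   Context: $\|\cdot\|$ is the Euclidean norm and $B_r(x)$ the open ball. $\psi'(x;d)$ is the directional derivative, $\partial\psi(x)=\nabla f(x)+\partial\varphi(x)$; $d_s(x)=\arg\min_{\|d\|\le1}\psi'(x;d)$ if $0\notin\partial\psi(x)$ and $d_s(x)=0$ otherwise. $\mathrm{prox}^{\Lambda}_{\varphi}(z)=\arg\min_y\varphi(y)+\frac12(y-z)^T\Lambda(y-z)$ and $F^{\Lambda}_{\mathrm{nat}}(x)=x-\mathrm{prox}^{\Lambda}_{\varphi}(x-\Lambda^{-1}\nabla f(x))$. *)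

(* Defs.v *)
From HB Require Import structures.
From mathcomp Require Import all_boot all_order all_algebra.
From mathcomp Require Import all_classical all_reals all_analysis.
Set Implicit Arguments. Unset Strict Implicit. Unset Printing Implicit Defensive.
Import Order.TTheory GRing.Theory Num.Theory.
Import numFieldNormedType.Exports.
Local Open Scope classical_set_scope.
Local Open Scope ring_scope.

Section Defs.
Variables (R : realType) (n : nat).
Notation vec := 'cV[R]_n.

Definition dotv (u v : vec) : R := (u^T *m v) 0 0.
Definition enorm (v : vec) : R := Num.sqrt (dotv v v).

Definition is_gradient (f : vec -> R) (x v : vec) : Prop :=
  forall eps : R, 0 < eps -> exists delta : R, 0 < delta /\
    forall h : vec, enorm h < delta ->
      `| f (x + h) - f x - dotv v h | <= eps * enorm h.

Definition vcontinuous (G : vec -> vec) : Prop :=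
  forall x : vec, forall eps : R, 0 < eps -> exists delta : R, 0 < delta /\
    forall y : vec, enorm (y - x) < delta -> enorm (G y - G x) < eps.

Definition C1_with_gradient (f : vec -> R) (gradf : vec -> vec) : Prop :=
  (forall x, is_gradient f x (gradf x)) /\ vcontinuous gradf.

Definition convex_fun (phi : vec -> R) : Prop :=
  forall (x y : vec) (t : R), 0 <= t -> t <= 1 ->
    phi (t *: x + (1 - t) *: y) <= t * phi x + (1 - t) * phi y.

Definition sym_pos_def (L : 'M[R]_n) : Prop :=
  L^T = L /\ forall v : vec, v != 0 -> 0 < dotv v (L *m v).

Definition dirder (psi : vec -> R) (x d : vec) : R :=
  lim ((fun t : R => (psi (x + t *: d) - psi x) / t) @ at_right (0 : R)).

Definition subdiff (phi : vec -> R) (x : vec) : set vec :=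
  [set v | forall y : vec, phi x + dotv v (y - x) <= phi y].

(* partial psi(x) = grad f(x) + partial phi(x) *)
Definition subdiff_comp (gradf : vec -> vec) (phi : vec -> R) (x : vec) : set vec :=
  [set gradf x + v | v in subdiff phi x].

Definition dsteep (f phi : vec -> R) (gradf : vec -> vec) (x : vec) : vec :=
  if asbool (subdiff_comp gradf phi x 0) then 0
  else xget 0 [set d | enorm d <= 1 /\
         forall e : vec, enorm e <= 1 ->
           dirder (f \+ phi) x d <= dirder (f \+ phi) x e].

Definition prox (L : 'M[R]_n) (phi : vec -> R) (z : vec) : vec :=
  xget 0 [set y | forall w : vec,
     phi y + 2^-1 * dotv (y - z) (L *m (y - z))
       <= phi w + 2^-1 * dotv (w - z) (L *m (w - z))].

Definition Fnat (L : 'M[R]_n) (phi : vec -> R) (gradf : vec -> vec) (x : vec) : vec :=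
  x - prox L phi (x - invmx L *m gradf x).

Definition g_steep (f phi : vec -> R) (gradf : vec -> vec) (x : vec) : vec :=
  dirder (f \+ phi) x (dsteep f phi gradf x) *: dsteep f phi gradf x.

Definition locally_bounded_away (g : vec -> vec) : Prop :=
  forall x : vec, g x != 0 -> exists r eps : R, 0 < r /\ 0 < eps /\
    forall y : vec, enorm (y - x) < r -> eps <= enorm (g y).

End Defs.

(* Main.v *)
Require Import Defs.
From HB Require Import structures.
From mathcomp Require Import all_boot all_order all_algebra.
From mathcomp Require Import all_classical all_reals all_analysis.
From mathcomp Require Import ring lra.
Set Implicit Arguments. Unset Strict Implicit. Unset Printing Implicit Defensive.
Import Order.TTheory GRing.Theory Num.Theory.
Import numFieldNormedType.Exports.
Local Open Scope classical_set_scope.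
Local Open Scope ring_scope.

Section All.
Variables (R : realType) (n : nat).
Notation vec := 'cV[R]_n.
Implicit Types u v w : vec.

Lemma dotvE u v : dotv u v = \sum_i u i 0 * v i 0.
Proof. by rewrite /dotv !mxE; apply: eq_bigr => i _; rewrite mxE. Qed.

Lemma dotvC u v : dotv u v = dotv v u.
Proof. by rewrite !dotvE; apply: eq_bigr => i _; rewrite mulrC. Qed.

Lemma dotvDl u v w : dotv (u + v) w = dotv u w + dotv v w.
Proof. by rewrite !dotvE -big_split; apply: eq_bigr => i _; rewrite mxE mulrDl. Qed.
Lemma dotvDr u v w : dotv w (u + v) = dotv w u + dotv w v.
Proof. by rewrite dotvC dotvDl !(dotvC w). Qed.
Lemma dotvZl a u v : dotv (a *: u) v = a * dotv u v.
Proof. by rewrite !dotvE mulr_sumr; apply: eq_bigr => i _; rewrite mxE mulrA. Qed.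
Lemma dotvZr a u v : dotv u (a *: v) = a * dotv u v.
Proof. by rewrite dotvC dotvZl dotvC. Qed.
Lemma dotvNl u v : dotv (- u) v = - dotv u v.
Proof. by rewrite -scaleN1r dotvZl mulN1r. Qed.
Lemma dotvNr u v : dotv u (- v) = - dotv u v.
Proof. by rewrite dotvC dotvNl dotvC. Qed.
Lemma dotvBl u v w : dotv (u - v) w = dotv u w - dotv v w.
Proof. by rewrite dotvDl dotvNl. Qed.
Lemma dotvBr u v w : dotv w (u - v) = dotv w u - dotv w v.
Proof. by rewrite dotvDr dotvNr. Qed.
Lemma dotv0l v : dotv 0 v = 0.
Proof. by rewrite -(scale0r 0) dotvZl mul0r. Qed.
Lemma dotv0r v : dotv v 0 = 0.
Proof. by rewrite dotvC dotv0l. Qed.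

Lemma dotvv_ge0 v : 0 <= dotv v v.
Proof. by rewrite dotvE; apply: sumr_ge0 => i _; exact: sqr_ge0. Qed.

Lemma dotvv_eq0 v : (dotv v v == 0) = (v == 0).
Proof.
apply/idP/idP => [|/eqP->]; last by rewrite dotv0l.
rewrite dotvE psumr_eq0; last by move=> i _; exact: sqr_ge0.
move/allP => H; apply/eqP/matrixP => i j; rewrite (ord1 j) mxE.
by have := H i (mem_index_enum _); rewrite /= mulf_eq0 orbb => /eqP.
Qed.

Lemma enorm_ge0 v : 0 <= enorm v.
Proof. by rewrite /enorm sqrtr_ge0. Qed.

Lemma enorm_sq v : enorm v ^+ 2 = dotv v v.
Proof. by rewrite sqr_sqrtr // dotvv_ge0. Qed.

Lemma enorm_eq0 v : (enorm v == 0) = (v == 0).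
Proof. by rewrite /enorm sqrtr_eq0 le_eqVlt ltNge dotvv_ge0 orbF dotvv_eq0. Qed.

Lemma enorm0 : enorm (0 : vec) = 0.
Proof. by apply/eqP; rewrite enorm_eq0. Qed.

Lemma enorm_gt0 v : v != 0 -> 0 < enorm v.
Proof. by move=> v0; rewrite lt_neqAle enorm_ge0 eq_sym enorm_eq0 v0. Qed.

Lemma CS u v : dotv u v ^+ 2 <= dotv u u * dotv v v.
Proof.
have [u0|uu] := eqVneq (dotv u u) 0.
  move: u0 => /eqP; rewrite dotvv_eq0 => /eqP ->.
  by rewrite dotv0l dotv0l expr0n /= mul0r.
have upos : 0 < dotv u u by rewrite lt_neqAle eq_sym uu dotvv_ge0.
have := dotvv_ge0 (v - (dotv u v / dotv u u) *: u).
rewrite !dotvBl !dotvBr !dotvZl !dotvZr (dotvC v u).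
set a := dotv u u; set b := dotv u v; set c := dotv v v => H.
have H2 := mulr_ge0 (ltW upos) H.
suff -> : b ^+ 2 = a * c - a * (c - b / a * b - (b / a * b - b / a * (b / a * a))).
  by rewrite lerBlDr lerDl.
by field; rewrite /a.
Qed.

Lemma CSn u v : `|dotv u v| <= enorm u * enorm v.
Proof.
rewrite -(@ler_pXn2r _ 2) // ?nnegrE ?mulr_ge0 ?enorm_ge0 //.
by rewrite real_normK ?num_real // exprMn !enorm_sq CS.
Qed.

Lemma CSr u v : dotv u v <= enorm u * enorm v.
Proof. exact: le_trans (ler_norm _) (CSn u v). Qed.

Lemma enormD u v : enorm (u + v) <= enorm u + enorm v.
Proof.
rewrite -(@ler_pXn2r _ 2) // ?nnegrE ?addr_ge0 ?enorm_ge0 //.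
rewrite enorm_sq dotvDl !dotvDr sqrrD !enorm_sq (dotvC v u).
have := CSr u v; lra.
Qed.

Lemma enormZ a v : enorm (a *: v) = `|a| * enorm v.
Proof.
by rewrite /enorm dotvZl dotvZr mulrA -expr2 sqrtrM ?sqr_ge0 // sqrtr_sqr.
Qed.

Lemma enormN v : enorm (- v) = enorm v.
Proof. by rewrite -scaleN1r enormZ normrN normr1 mul1r. Qed.

Lemma enormB u v : enorm (u - v) = enorm (v - u).
Proof. by rewrite -enormN opprB. Qed.

Lemma enormBr u v : enorm u - enorm v <= enorm (u - v).
Proof. have := enormD (u - v) v; rewrite subrK; lra. Qed.

Lemma coord_le v i : `|v i 0| <= enorm v.
Proof.
rewrite -(@ler_pXn2r _ 2) // ?nnegrE ?enorm_ge0 //.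
rewrite enorm_sq dotvE real_normK ?num_real // (bigD1 i) //= lerDl.
by apply: sumr_ge0 => j _; exact: sqr_ge0.
Qed.

Lemma enorm_le_sum v : enorm v <= \sum_i `|v i 0|.
Proof.
rewrite -(@ler_pXn2r _ 2) // ?nnegrE ?enorm_ge0 ?sumr_ge0 //.
rewrite enorm_sq dotvE expr2 mulr_suml; apply: ler_sum => i _.
rewrite mulr_sumr (bigD1 i) //= -normrM ler_wpDr ?sumr_ge0 // ?real_ler_norm ?num_real //.

Qed.

Definition econt (F : vec -> R) := forall x eps, 0 < eps -> exists delta, 0 < delta /\
   forall y, enorm (y - x) < delta -> `|F y - F x| < eps.
Lemma econt_rV (F : vec -> R) : econt F -> continuous (fun w : 'rV[R]_n => F w^T).
Proof.
move=> cF w0; apply/(@cvgrPdist_lt _ _ _ (nbhs w0) (nbhs_filter w0)) => e e0.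
have [d [d0 Hd]] := cF (w0^T) e e0.
have dn : 0 < d / n.+1%:R by rewrite divr_gt0.
near=> w; rewrite distrC; apply: Hd.
apply: le_lt_trans (enorm_le_sum _) _.
have : ball w0 (d / n.+1%:R) w by near: w; exact: (@near_ball _ _ w0 _ dn).
case=> _ H.
apply: (@le_lt_trans _ _ (\sum_(i < n) d / n.+1%:R)).
  apply: ler_sum => i _; rewrite !mxE; have := H ord0 i.
  by rewrite /ball /= distrC => /ltW.
rewrite sumr_const card_ord.
have -> : d / n.+1%:R *+ n = d * (n%:R / n.+1%:R) by rewrite -[LHS]mulr_natr; ring.
rewrite gtr_pMr // ltr_pdivrMr ?ltr0Sn //.
by rewrite mul1r ltr_nat.
Unshelve. all: by end_near.
Qed.
Lemma econt_enormB (c : vec) : econt (fun v => enorm (v - c)).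
Proof.
move=> x e e0; exists e; split => // y Hy.
have H1 := enormBr (y - c) (x - c); have H2 := enormBr (x - c) (y - c).
rewrite (_ : y - c - (x - c) = y - x) in H1; last by rewrite opprB addrA subrK.
rewrite (_ : x - c - (y - c) = x - y) in H2; last by rewrite opprB addrA subrK.
rewrite (enormB x y) in H2.
rewrite ltr_norml; apply/andP; split; lra.
Qed.

Lemma evt (F G : vec -> R) (c : vec) (rho : R) : econt F -> econt G ->
  (exists v, G v <= 0 /\ enorm (v - c) <= rho) ->
  exists d, (G d <= 0 /\ enorm (d - c) <= rho) /\
    forall e, G e <= 0 -> enorm (e - c) <= rho -> F d <= F e.
Proof.
move=> cF cG [v0 [Gv0 Hv0]].
pose A := [set w : 'rV[R]_n | G w^T <= 0 /\ enorm (w^T - c) <= rho].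
have Acl : closed A.
  have -> : A = (fun w : 'rV[R]_n => G w^T) @^-1` [set x | x <= 0] `&`
                (fun w : 'rV[R]_n => enorm (w^T - c)) @^-1` [set x | x <= rho].
    by [].
  apply: closedI; apply: preimage_closed; try exact: closed_le.
    by move=> w _; exact: (econt_rV cG).
  by move=> w _; exact: (econt_rV (@econt_enormB c)).
have Bco : compact [set w : 'rV[R]_n | forall i,
     `[c i 0 - rho, c i 0 + rho]%classic (w ord0 i)].
  by apply: (@rV_compact _ _ (fun i => `[c i 0 - rho, c i 0 + rho]%classic)) => i;
     exact: segment_compact.
have cA : compact A.
  apply: subclosed_compact Acl Bco _ => w [_ Hw] i /=.
  have := le_trans (coord_le (w^T - c) i) Hw.
  by rewrite !mxE ler_norml in_itv /=; move=> /andP[H1 H2]; apply/andP; split; lra.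
have A0 : A !=set0 by exists v0^T; rewrite /A /= trmxK.
have [d dA Hd] := compact_EVT_min A0 cA (continuous_subspaceT (econt_rV cF)).
move: dA; rewrite inE => -[Gd Hdc].
exists d^T; split => // e Ge He.
have := Hd e^T; rewrite trmxK; apply; rewrite inE /A /= trmxK; split => //.
Qed.

Lemma vec0_n0 : n = 0%N -> forall h : vec, h = 0.
Proof.
move=> n0 h; apply/matrixP => i j; have := ltn_ord i; by rewrite {2}n0.
Qed.

Definition mnorm (A : 'M[R]_n) := \sum_i \sum_j `|A i j|.

Lemma mnorm_ge0 A : 0 <= mnorm A.
Proof. by apply: sumr_ge0 => i _; apply: sumr_ge0. Qed.

Lemma mx_bound (A : 'M[R]_n) (v : vec) : enorm (A *m v) <= mnorm A * enorm v.
Proof.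
apply: le_trans (enorm_le_sum _) _.
rewrite /mnorm mulr_suml; apply: ler_sum => i _.
rewrite mxE mulr_suml; apply: le_trans (ler_norm_sum _ _ _) _.
apply: ler_sum => j _; rewrite normrM; apply: ler_wpM2l => //.
exact: coord_le.
Qed.

Lemma econt_lip (F : vec -> R) :
  (forall x, exists K, forall y, enorm (y - x) < 1 -> `|F y - F x| <= K * enorm (y - x)) ->
  econt F.
Proof.
move=> H x e e0; have [K HK] := H x.
pose K' := `|K| + 1.
have K'0 : 0 < K' by rewrite /K' ltr_pwDr // normr_ge0.
exists (Num.min 1 (e / K')); split; first by rewrite lt_min ltr01 divr_gt0.
move=> y; rewrite lt_min => /andP[y1 ye].
apply: le_lt_trans (HK y y1) _.
apply: (@le_lt_trans _ _ (K' * enorm (y - x))).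
  apply: ler_wpM2r; first exact: enorm_ge0.
  rewrite /K'; have := ler_norm K; lra.
by rewrite mulrC -ltr_pdivlMr.
Qed.

Lemma dotv_sym (L : 'M[R]_n) (u v : vec) : L^T = L -> dotv u (L *m v) = dotv v (L *m u).
Proof.
move=> LT; rewrite !dotvE.
under eq_bigr do rewrite mxE big_distrr /=.
under [RHS]eq_bigr do rewrite mxE big_distrr /=.
rewrite exchange_big /=; apply: eq_bigr => i _; apply: eq_bigr => j _.
have := congr1 (fun M : 'M[R]_n => M i j) LT; rewrite mxE => ->.
ring.
Qed.

Lemma quad_diff (L : 'M[R]_n) (a b : vec) :
  dotv a (L *m a) - dotv b (L *m b) = dotv (a - b) (L *m a) + dotv b (L *m (a - b)).
Proof. rewrite mulmxBr dotvBl dotvBr; ring. Qed.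

Lemma econt_quad (L : 'M[R]_n) (z : vec) : econt (fun y => dotv (y - z) (L *m (y - z))).
Proof.
apply: econt_lip => x.
exists (mnorm L * (2 * enorm (x - z) + 1)) => y yx.
set a := y - z; set b := x - z.
have ab : a - b = y - x by rewrite /a /b opprB addrA subrK.
rewrite quad_diff ab.
apply: le_trans (ler_normD _ _) _.
have h1 := CSn (y - x) (L *m a); have h2 := CSn b (L *m (y - x)).
have h3 := mx_bound L a; have h4 := mx_bound L (y - x).
have ha : enorm a <= enorm b + enorm (y - x).
  by rewrite -ab; have := enormD b (a - b); rewrite addrC subrK.
have e1 := enorm_ge0 (y - x); have e2 := enorm_ge0 b; have e3 := mnorm_ge0 L.
have e4 := enorm_ge0 (L *m a); have e5 := enorm_ge0 (L *m (y - x)).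
have e6 := enorm_ge0 a.
have f1 : enorm (y - x) * enorm (L *m a) <= enorm (y - x) * (mnorm L * (enorm b + 1)).
  apply: ler_wpM2l => //; apply: le_trans h3 _; apply: ler_wpM2l => //; lra.
have f2 : enorm b * enorm (L *m (y - x)) <= enorm b * (mnorm L * enorm (y - x)).
  by apply: ler_wpM2l.
nra.
Qed.


Lemma enorm_normalize (v : vec) : v != 0 -> enorm ((enorm v)^-1 *: v) = 1.
Proof.
move=> v0; have e0 := enorm_gt0 v0.
by rewrite enormZ ger0_norm ?invr_ge0 ?ltW // mulVf // gt_eqF.
Qed.

Lemma exists_nonzero : (0 < n)%N -> exists v : vec, v != 0.
Proof.
move=> np; exists (delta_mx (Ordinal np) 0); apply/eqP.
move/matrixP => /(_ (Ordinal np) 0); rewrite !mxE !eqxx /=.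
by move/eqP; rewrite oner_eq0.
Qed.

Lemma spd_lower (L : 'M[R]_n) : sym_pos_def L ->
  exists lam, 0 < lam /\ forall v : vec, lam * enorm v ^+ 2 <= dotv v (L *m v).
Proof.
move=> [LT Lpos].
have [n0|npos] := posnP n.
  exists 1; split => // v; rewrite (vec0_n0 n0 v) enorm0 expr0n /= mulr0.
  by rewrite dotvE big1 // => i _; rewrite !mxE mul0r.
have cG : econt (fun v : vec => 1 - enorm (v - 0)).
  move=> x e e0; have [d [d0 Hd]] := (econt_enormB 0) x e e0.
  exists d; split => // y /Hd H.
  have -> : 1 - enorm (y - 0) - (1 - enorm (x - 0)) = - (enorm (y - 0) - enorm (x - 0)).
    by ring.
  by rewrite normrN.
have [v0 v00] := exists_nonzero npos.
have ex0 : exists v : vec, 1 - enorm (v - 0) <= 0 /\ enorm (v - 0) <= 1.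
  by exists ((enorm v0)^-1 *: v0); rewrite subr0 enorm_normalize // subrr; split.
have [d [[Gd Hd] Hmin]] := evt (econt_quad L 0) cG ex0.
move: Gd Hd; rewrite !subr0 => Gd Hd.
have d0 : d != 0.
  by apply/eqP => d0; move: Gd; rewrite d0 enorm0 subr0 ler10.
exists (dotv d (L *m d)); split; first exact: Lpos.
move=> v; have [->|vn0] := eqVneq v 0.
  by rewrite enorm0 expr0n /= mulr0 dotvE big1 // => i _; rewrite !mxE mul0r.
have := Hmin ((enorm v)^-1 *: v); rewrite !subr0 enorm_normalize // subrr.
move=> /(_ (lexx _) (lexx _)).
rewrite -scalemxAr dotvZl dotvZr mulrA -expr2 => H.
have ev0 := enorm_gt0 vn0.
have ev2 : 0 < enorm v ^+ 2 by rewrite exprn_gt0.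
rewrite -ler_pdivlMr // mulrC; move: H.
by rewrite exprVn mulrC.
Qed.


Section Conv.
Variable phi : vec -> R.
Hypothesis cphi : convex_fun phi.

Lemma jensen (I : eqType) (s : seq I) (w : I -> R) (p : I -> vec) :
  (forall i, 0 <= w i) -> \sum_(i <- s) w i = 1 ->
  phi (\sum_(i <- s) w i *: p i) <= \sum_(i <- s) w i * phi (p i).
Proof.
elim: s w => [|a s IH] w w0 ws.
  by move: ws; rewrite big_nil => /esym/eqP; rewrite oner_eq0.
move: ws; rewrite !big_cons => ws.
set W := \sum_(i <- s) w i in ws.
have W0 : 0 <= W by apply: sumr_ge0.
have [WE|Wpos] := eqVneq W 0.
  have wi0 : forall i, i \in s -> w i = 0.
    move=> i Hi; move: WE; rewrite /W => /eqP; rewrite psumr_eq0 //.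
    by move/allP => /(_ i Hi) /implyP /(_ isT) /eqP.
  have wa1 : w a = 1 by move: ws; rewrite WE addr0.
  rewrite big1_seq; last by move=> i /andP[_ Hi]; rewrite wi0 // scale0r.
  rewrite big1_seq; last by move=> i /andP[_ Hi]; rewrite wi0 // mul0r.
  by rewrite wa1 scale1r mul1r !addr0.
have Wp : 0 < W by rewrite lt_neqAle eq_sym Wpos W0.
pose w' i := w i / W.
have IH' := IH w' (fun i => divr_ge0 (w0 i) W0).
have : \sum_(i <- s) w' i = 1 by rewrite /w' -mulr_suml -/W divff.
move/IH' => {}IH'.
have E1 : \sum_(i <- s) w i *: p i = W *: \sum_(i <- s) w' i *: p i.
  rewrite scaler_sumr; apply: eq_bigr => i _; rewrite scalerA /w'.
  by rewrite mulrCA divff // mulr1.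
have E2 : \sum_(i <- s) w i * phi (p i) = W * \sum_(i <- s) w' i * phi (p i).
  rewrite mulr_sumr; apply: eq_bigr => i _; rewrite mulrA /w'.
  by rewrite mulrCA divff // mulr1.
have wa : W = 1 - w a by rewrite -ws addrAC subrr add0r.
have wa1 : w a <= 1 by rewrite -ws lerDl.
rewrite E1 E2 wa.
apply: le_trans (cphi _ _ (w0 a) wa1) _.
rewrite lerD2l; apply: ler_wpM2l; last exact: IH'.
by rewrite subr_ge0.
Qed.

Definition ev (i : 'I_n) : vec := delta_mx i 0.

Lemma vec_sum (h : vec) : h = \sum_i h i 0 *: ev i.
Proof.
rewrite {1}(matrix_sum_delta h); apply: eq_bigr => i _.
by rewrite big_ord1.
Qed.

Lemma seg_bound (x : vec) i s : `|s| <= 1 ->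
  phi (x + s *: ev i) <= `|phi (x + ev i)| + `|phi (x - ev i)|.
Proof.
move=> hs; pose t := (1 + s) / 2.
have t0 : 0 <= t by rewrite /t divr_ge0 //; move: hs; rewrite ler_norml; lra.
have t1 : t <= 1 by rewrite /t ler_pdivrMr //; move: hs; rewrite ler_norml; lra.
have -> : x + s *: ev i = t *: (x + ev i) + (1 - t) *: (x - ev i).
  by apply/matrixP => k l; rewrite !mxE /t; field.
apply: le_trans (cphi _ _ t0 t1) _.
have h1 := ler_norm (phi (x + ev i)); have h2 := ler_norm (phi (x - ev i)).
have h3 : 0 <= 1 - t by lra.
have := ler_wpM2l t0 h1; have := ler_wpM2l h3 h2.
have := normr_ge0 (phi (x + ev i)); have := normr_ge0 (phi (x - ev i)).
nra.
Qed.




Lemma conv_ub (x : vec) : exists r M, 0 < r /\ forall h, enorm h <= r -> phi (x + h) <= M.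
Proof.
have [n0|npos] := posnP n.
  exists 1, (phi x); split => // h _; by rewrite (vec0_n0 n0 h) addr0.
have nR : 0 < n%:R :> R by rewrite ltr0n.
pose M := \sum_i (`|phi (x + ev i)| + `|phi (x - ev i)|).
exists n%:R^-1, M; split; first by rewrite invr_gt0.
move=> h hr.
have E : x + h = \sum_(i <- index_enum 'I_n) n%:R^-1 *: (x + (n%:R * h i 0) *: ev i).
  rewrite (eq_bigr (fun i => n%:R^-1 *: x + h i 0 *: ev i)); last first.
    by move=> i _; rewrite scalerDr scalerA mulrA mulVf ?gt_eqF // mul1r.
  rewrite big_split /= sumr_const card_ord -scaler_nat scalerA mulfV ?gt_eqF // scale1r.
  by rewrite -vec_sum.
have w0 : forall i : 'I_n, 0 <= n%:R^-1 :> R by move=> _; rewrite invr_ge0 ltW.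
have w1 : \sum_(i <- index_enum 'I_n) n%:R^-1 = 1 :> R.
  by rewrite sumr_const card_ord -[_ *+ n]mulr_natr mulVf ?gt_eqF.
rewrite E; apply: le_trans (@jensen _ (index_enum 'I_n) (fun=> n%:R^-1)
   (fun i => x + (n%:R * h i 0) *: ev i) w0 w1) _.
apply: le_trans (_ : \sum_(i <- index_enum 'I_n) n%:R^-1 * M <= M).
  apply: ler_sum => i _; apply: ler_wpM2l; first by rewrite invr_ge0 ltW.
  apply: le_trans (seg_bound _ _ _) _.
    rewrite normrM (ger0_norm (ltW nR)).
    have H := le_trans (coord_le h i) hr; have nn : n%:R * n%:R^-1 = 1 :> R by rewrite mulfV // gt_eqF. by have := ler_wpM2l (ltW nR) H; rewrite nn.
  rewrite /M (bigD1 i) //= lerDl; apply: sumr_ge0 => j _.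
  by rewrite addr_ge0.
by rewrite sumr_const card_ord -[_ *+ n]mulr_natr mulrAC mulVf ?gt_eqF // mul1r.
Qed.

Lemma conv_econt : econt phi.
Proof.
move=> x e e0.
have [r [M [r0 HM]]] := conv_ub x.
have Mx : phi x <= M by have := HM 0; rewrite enorm0 addr0; apply; exact: ltW.
pose K := M - phi x + 1.
have K0 : 0 < K by rewrite /K; lra.
exists (Num.min r (e * r / K)); split.
  by rewrite lt_min r0 divr_gt0 // mulr_gt0.
move=> y; rewrite lt_min => /andP[sr sK].
have [->|yx] := eqVneq y x; first by rewrite subrr normr0.
set s := enorm (y - x) in sr sK.
have s0 : 0 < s by apply: enorm_gt0; rewrite subr_eq0.
have sr' : s / r <= 1 by rewrite ler_pdivrMr // mul1r ltW.
have sr0 : 0 <= s / r by rewrite divr_ge0 // ltW.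
have Hu : phi (x + (r / s) *: (y - x)) <= M.
  apply: HM; rewrite enormZ (ger0_norm (divr_ge0 (ltW r0) (ltW s0))) -/s.
  by rewrite mulrAC -mulrA divff ?gt_eqF // mulr1.
have Hw : phi (x + (- (r / s)) *: (y - x)) <= M.
  apply: HM; rewrite enormZ normrN (ger0_norm (divr_ge0 (ltW r0) (ltW s0))) -/s.
  by rewrite mulrAC -mulrA divff ?gt_eqF // mulr1.
have I1 : phi y <= s / r * M + (1 - s / r) * phi x.
  have -> : y = (s / r) *: (x + (r / s) *: (y - x)) + (1 - s / r) *: x.
    apply/matrixP => k l; rewrite !mxE; field.
    by apply/andP; split; rewrite gt_eqF.
  apply: le_trans (cphi _ _ sr0 sr') _.
  by rewrite lerD2r ler_wpM2l.
have rs0 : 0 < r + s by rewrite addr_gt0.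
have t0 : 0 <= s / (r + s) by rewrite divr_ge0 // ltW.
have t1 : s / (r + s) <= 1 by rewrite ler_pdivrMr // mul1r; lra.
have I2 : phi x <= s / (r + s) * M + (1 - s / (r + s)) * phi y.
  have {1}-> : x = (s / (r + s)) *: (x + (- (r / s)) *: (y - x)) + (1 - s / (r + s)) *: y.
    apply/matrixP => k l; rewrite !mxE; field.
    by apply/andP; split; rewrite gt_eqF ?addr_gt0.
  apply: le_trans (cphi _ _ t0 t1) _.
  by rewrite lerD2r ler_wpM2l.
have J2 : (r + s) * phi x <= s * M + r * phi y.
  have := ler_wpM2l (ltW rs0) I2.
  have -> : (r + s) * (s / (r + s) * M + (1 - s / (r + s)) * phi y) = s * M + r * phi y.
    by field; rewrite gt_eqF.
  by [].
have J1 : r * phi y <= s * M + (r - s) * phi x.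
  have := ler_wpM2l (ltW r0) I1.
  have -> : r * (s / r * M + (1 - s / r) * phi x) = s * M + (r - s) * phi x.
    by field; rewrite gt_eqF.
  by [].
have sK' : s * K < e * r by rewrite -ltr_pdivlMr.
rewrite /K in sK'.
rewrite ltr_norml; apply/andP; split; nra.
Qed.
End Conv.
End All.

Section P.
Variables (R : realType) (n : nat).
Notation vec := 'cV[R]_n.

Lemma econt_comb (F G : vec -> R) (c : R) : econt F -> econt G -> econt (fun y => F y + c * G y).
Proof.
move=> cF cG x e e0.
have e2 : 0 < e / 2 by rewrite divr_gt0.
have c1 : 0 < `|c| + 1 by rewrite ltr_pwDr // normr_ge0.
have e3 : 0 < e / 2 / (`|c| + 1) by rewrite divr_gt0.
have [d1 [d10 H1]] := cF x _ e2.
have [d2 [d20 H2]] := cG x _ e3.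
exists (Num.min d1 d2); split; first by rewrite lt_min d10 d20.
move=> y; rewrite lt_min => /andP[y1 y2].
have h1 := H1 y y1; have h2 := H2 y y2.
have -> : F y + c * G y - (F x + c * G x) = (F y - F x) + c * (G y - G x) by ring.
apply: le_lt_trans (ler_normD _ _) _; rewrite normrM.
have h3 : `|c| * `|G y - G x| <= (`|c| + 1) * `|G y - G x|.
  by apply: ler_wpM2r; [exact: normr_ge0 | lra].
have h4 : (`|c| + 1) * `|G y - G x| < e / 2.
  by rewrite mulrC -ltr_pdivlMr.
have -> : e = e / 2 + e / 2 by field.
lra.
Qed.

Lemma pos_limit (A B : R) : (forall t, 0 < t -> t <= 1 -> 0 <= A + t * B) -> 0 <= A.
Proof.
move=> H; rewrite leNgt; apply/negP => A0.
have b1 : 0 < `|B| + 1 by rewrite ltr_pwDr // normr_ge0.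
pose t := Num.min 1 (- A / 2 / (`|B| + 1)).
have t0 : 0 < t by rewrite lt_min ltr01 !divr_gt0 // oppr_gt0.
have t1 : t <= 1 by rewrite ge_min lexx.
have t2 : t <= - A / 2 / (`|B| + 1) by rewrite ge_min lexx orbT.
have := H t t0 t1.
have t3 : t * (`|B| + 1) <= - A / 2 by rewrite -ler_pdivlMr.
have := ler_norm B; have := normr_ge0 B.
have : t * B <= t * `|B| by apply: ler_wpM2l; [exact: ltW | exact: ler_norm].
nra.
Qed.

Lemma econt_const (c : R) : econt (fun _ : vec => c).
Proof. by move=> x e e0; exists 1; split => // y _; rewrite subrr normr0. Qed.

Variable phi : vec -> R.
Hypothesis cphi : convex_fun phi.
Variable L : 'M[R]_n.
Hypothesis spd : sym_pos_def L.

Definition hz (z y : vec) := phi y + 2^-1 * dotv (y - z) (L *m (y - z)).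

Lemma phi_lower (z : vec) : exists b, 0 <= b /\ forall y, phi z - 1 - b * enorm (y - z) <= phi y.
Proof.
have [d [d0 Hd]] := conv_econt cphi z ltr01.
pose rho := d / 2.
have rho0 : 0 < rho by rewrite divr_gt0.
exists rho^-1; split; first by rewrite invr_ge0 ltW.
move=> y; set s := enorm (y - z).
have s0 : 0 <= s := enorm_ge0 _.
have [srho|srho] := leP s rho.
  have : `|phi y - phi z| < 1 by apply: Hd; rewrite -/s; apply: le_lt_trans srho _; rewrite /rho ltr_pdivrMr // ltr_pMr // ltr1n.
  rewrite ltr_norml => /andP[h _].
  have : 0 <= rho^-1 * s by rewrite mulr_ge0 // invr_ge0 ltW.
  lra.
have sp : 0 < s := lt_trans rho0 srho.
set u := z + (rho / s) *: (y - z).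
have hu : enorm (u - z) = rho.
  rewrite /u addrC addKr enormZ ger0_norm ?divr_ge0 //; last exact: ltW.
  by rewrite -/s mulrAC -mulrA divff ?gt_eqF // mulr1.
have : `|phi u - phi z| < 1 by apply: Hd; rewrite hu /rho ltr_pdivrMr // ltr_pMr // ltr1n.
rewrite ltr_norml => /andP[h _].
have t0 : 0 <= rho / s by rewrite divr_ge0 // ltW.
have t1 : rho / s <= 1 by rewrite ler_pdivrMr // mul1r ltW.
have := cphi y z t0 t1.
have -> : rho / s *: y + (1 - rho / s) *: z = u.
  by apply/matrixP => i j; rewrite !mxE; field; rewrite gt_eqF.
move=> hc.
have : s * phi u <= rho * phi y + (s - rho) * phi z.
  have := ler_wpM2l (ltW sp) hc.
  have -> : s * (rho / s * phi y + (1 - rho / s) * phi z) = rho * phi y + (s - rho) * phi z.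
    by field; rewrite gt_eqF.
  by [].
move=> hc2.
have : phi z - rho^-1 * s <= phi y.
  rewrite -(ler_pM2l rho0) mulrBr mulrA divff ?gt_eqF // mul1r.
  nra.
lra.
Qed.


Lemma hz_econt z : econt (hz z).
Proof. exact: (econt_comb _ (conv_econt cphi) (econt_quad L z)). Qed.

Lemma quad_expand (a d : vec) (t : R) :
  dotv (a + t *: d) (L *m (a + t *: d)) =
  dotv a (L *m a) + 2 * t * dotv a (L *m d) + t ^+ 2 * dotv d (L *m d).
Proof.
rewrite mulmxDr -scalemxAr !dotvDl !dotvDr !dotvZl !dotvZr.
rewrite (dotv_sym d a spd.1); ring.
Qed.

Lemma prox_exists z : exists p, forall w, hz z p <= hz z w.
Proof.
have [lam [lam0 Hlam]] := spd_lower spd.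
have [b [b0 Hab]] := phi_lower z.
pose S := 1 + 2 * (b + 1) / lam.
have S1 : 1 <= S by rewrite /S lerDl divr_ge0 // ?mulr_ge0 ?addr_ge0 // ltW.
have ex0 : exists v : vec, (fun=> 0 : R) v <= 0 /\ enorm (v - z) <= S.
  by exists z; rewrite subrr enorm0; split => //; apply: le_trans S1.
have [p [[_ Hp] Hmin]] := evt (hz_econt z) (econt_const 0) ex0.
exists p => w.
have [ws|ws] := leP (enorm (w - z)) S; first exact: Hmin.
apply: le_trans (Hmin z (lexx _) _) _; first by rewrite subrr enorm0; apply: le_trans S1.
rewrite /hz subrr dotv0l mulr0 addr0.
set s := enorm (w - z) in ws.
have := Hab w; have := Hlam (w - z); rewrite -/s => hl ha.
have s1 : 1 < s by apply: le_lt_trans ws.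
have hs : lam * s > lam + 2 * (b + 1).
  have : lam * S < lam * s by rewrite ltr_pM2l.
  rewrite /S mulrDr mulr1.
  have -> : lam * (2 * (b + 1) / lam) = 2 * (b + 1) by field; rewrite gt_eqF.
  by [].
have : (b + 1) * s <= 2^-1 * (lam * s ^+ 2).
  have -> : 2^-1 * (lam * s ^+ 2) = (2^-1 * (lam * s)) * s by rewrite expr2; ring.
  apply: ler_wpM2r; first lra.
  lra.
nra.
Qed.


Lemma prox_spec z : forall w, hz z (prox L phi z) <= hz z w.
Proof. exact: (@xgetPex _ 0 [set y | forall w, hz z y <= hz z w] (prox_exists z)). Qed.

Lemma prox_opt z p : (forall w, hz z p <= hz z w) ->
  forall w, 0 <= phi w - phi p + dotv (p - z) (L *m (w - p)).
Proof.
move=> H w; apply: (@pos_limit _ (2^-1 * dotv (w - p) (L *m (w - p)))) => t t0 t1.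
have := H (t *: w + (1 - t) *: p); have c := cphi w p (ltW t0) t1.
have E : t *: w + (1 - t) *: p - z = (p - z) + t *: (w - p).
  by apply/matrixP => i j; rewrite !mxE; ring.
rewrite /hz E quad_expand => h.
set D := dotv (p - z) (L *m (w - p)) in h *.
set Q := dotv (w - p) (L *m (w - p)) in h *.
set q0 := dotv (p - z) (L *m (p - z)) in h.
nra.
Qed.

Lemma prox_nonexp lam : 0 < lam -> (forall v, lam * enorm v ^+ 2 <= dotv v (L *m v)) ->
  forall z1 z2 p1 p2, (forall w, hz z1 p1 <= hz z1 w) -> (forall w, hz z2 p2 <= hz z2 w) ->
  lam * enorm (p1 - p2) <= mnorm L * enorm (z1 - z2).
Proof.
move=> lam0 Hlam z1 z2 p1 p2 H1 H2.
have o1 := prox_opt H1 p2; have o2 := prox_opt H2 p1.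
have E : dotv (p1 - z1) (L *m (p2 - p1)) + dotv (p2 - z2) (L *m (p1 - p2)) =
   dotv (z1 - z2) (L *m (p1 - p2)) - dotv (p1 - p2) (L *m (p1 - p2)).
  rewrite !mulmxBr !dotvBl !dotvBr; ring.
have S : dotv (p1 - p2) (L *m (p1 - p2)) <= dotv (z1 - z2) (L *m (p1 - p2)) by lra.
have C1 := CSn (z1 - z2) (L *m (p1 - p2)).
have C2 := mx_bound L (p1 - p2).
have h := Hlam (p1 - p2).
set e := enorm (p1 - p2) in C2 h *.
set ez := enorm (z1 - z2) in C1 *.
have e0 : 0 <= e := enorm_ge0 _.
have ez0 : 0 <= ez := enorm_ge0 _.
have C3 : ez * enorm (L *m (p1 - p2)) <= ez * (mnorm L * e) by apply: ler_wpM2l.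
have h2 : lam * e ^+ 2 <= mnorm L * ez * e.
  apply: le_trans h _; apply: le_trans S _; apply: le_trans (ler_norm _) _.
  apply: le_trans C1 _; apply: le_trans C3 _; rewrite mulrCA mulrA; exact: lexx.
have [e00|epos] := eqVneq e 0.
  by rewrite e00 mulr0 mulr_ge0 // mnorm_ge0.
have ep : 0 < e by rewrite lt_neqAle eq_sym epos e0.
by move: h2; rewrite expr2 mulrA ler_pM2r.
Qed.


Lemma enormB_le (a b : vec) : enorm (a - b) <= enorm a + enorm b.
Proof. by have := enormD a (- b); rewrite enormN. Qed.

Lemma vec_id4 (a b c d : vec) : a - b - (c - d) = (a - c) - (b - d).
Proof. by apply/matrixP => i j; rewrite !mxE; ring. Qed.

Lemma part_b (gradf : vec -> vec) : vcontinuous gradf -> locally_bounded_away (Fnat L phi gradf).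
Proof.
move=> gc x Fx0.
have [lam [lam0 Hlam]] := spd_lower spd.
set C := mnorm L; set Ci := mnorm (invmx L).
have C0 : 0 <= C := mnorm_ge0 _.
have Ci0 : 0 <= Ci := mnorm_ge0 _.
set k := C / lam.
have k0 : 0 <= k by rewrite divr_ge0 // ltW.
pose e := enorm (Fnat L phi gradf x).
have e0 : 0 < e := enorm_gt0 Fx0.
pose A := 2 + k; pose B := k * Ci + 1.
have A0 : 0 < A by rewrite /A; lra.
have B0 : 0 < B by rewrite /B ltr_pwDr // mulr_ge0.
have eB : 0 < e / 4 / B by rewrite !divr_gt0.
have eA : 0 < e / 4 / A by rewrite !divr_gt0.
have [d1 [d10 Hd1]] := gc x _ eB.
exists (Num.min d1 (e / 4 / A)), (e / 2); split; first by rewrite lt_min d10 eA.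
split; first by rewrite divr_gt0.
move=> y; rewrite lt_min => /andP[yd1 yA].
have hg := Hd1 y yd1.
set u := enorm (y - x) in yd1 yA hg.
set g := enorm (gradf y - gradf x) in hg.
have u0 : 0 <= u := enorm_ge0 _.
have g0 : 0 <= g := enorm_ge0 _.
pose zx := x - invmx L *m gradf x; pose zy := y - invmx L *m gradf y.
pose px := prox L phi zx; pose py := prox L phi zy.
have hp : lam * enorm (px - py) <= C * enorm (zx - zy) :=
  prox_nonexp lam0 Hlam (prox_spec zx) (prox_spec zy).
have hz1 : enorm (zx - zy) <= u + Ci * g.
  have -> : zx - zy = (x - y) - invmx L *m (gradf x - gradf y).
    by rewrite /zx /zy mulmxBr; apply/matrixP => i j; rewrite !mxE; ring.
  apply: le_trans (enormB_le _ _) _.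
  apply: lerD; first by rewrite (enormB x y); exact: lexx.
  apply: le_trans (mx_bound _ _) _; rewrite (enormB (gradf x)); exact: lexx.
have hp' : lam * enorm (px - py) <= C * (u + Ci * g) := le_trans hp (ler_wpM2l C0 hz1).
have hp2 : enorm (px - py) <= k * (u + Ci * g).
  have -> : k * (u + Ci * g) = (C * (u + Ci * g)) / lam by rewrite /k; field; rewrite gt_eqF.
  by rewrite ler_pdivlMr // mulrC.
have hT : enorm (Fnat L phi gradf x - Fnat L phi gradf y) <= u + k * (u + Ci * g).
  have -> : Fnat L phi gradf x = x - px by [].
  have -> : Fnat L phi gradf y = y - py by [].
  rewrite vec_id4.
  apply: le_trans (enormB_le _ _) _.
  apply: lerD => //; rewrite (enormB x y); exact: lexx.
have hAu : A * u < e / 4 by rewrite mulrC -ltr_pdivlMr.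
have hBg : B * g < e / 4 by rewrite mulrC -ltr_pdivlMr.
have hr : e - enorm (Fnat L phi gradf y) <= enorm (Fnat L phi gradf x - Fnat L phi gradf y) := enormBr _ _.
rewrite /A mulrDl in hAu; rewrite /B mulrDl mul1r in hBg.
rewrite mulrDr in hT.
have : 0 <= k * u by rewrite mulr_ge0.
have : k * Ci * g = k * (Ci * g) by rewrite mulrA.
lra.
Qed.

End P.

Section D.
Variables (R : realType) (n : nat).
Notation vec := 'cV[R]_n.
Variable phi : vec -> R.
Hypothesis cphi : convex_fun phi.

Definition Qp (y d : vec) (t : R) := (phi (y + t *: d) - phi y) / t.
Definition qset (y d : vec) := Qp y d @` [set t : R | 0 < t].

Lemma Qp_mono y d t s : 0 < t -> t <= s -> Qp y d t <= Qp y d s.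
Proof.
move=> t0 ts; have s0 : 0 < s := lt_le_trans t0 ts.
have a0 : 0 <= t / s by rewrite divr_ge0 // ltW.
have a1 : t / s <= 1 by rewrite ler_pdivrMr // mul1r.
have := cphi (y + s *: d) y a0 a1.
have -> : t / s *: (y + s *: d) + (1 - t / s) *: y = y + t *: d.
  by apply/matrixP => i j; rewrite !mxE; field; rewrite gt_eqF.
move=> h; rewrite /Qp ler_pdivrMr // mulrAC ler_pdivlMr //.
have : s * phi (y + t *: d) <= s * (t / s * phi (y + s *: d) + (1 - t / s) * phi y).
  by rewrite ler_pM2l.
have -> : s * (t / s * phi (y + s *: d) + (1 - t / s) * phi y) =
   t * phi (y + s *: d) + (s - t) * phi y by field; rewrite gt_eqF.
lra.
Qed.

Lemma Qp_lb y d t : 0 < t -> phi y - phi (y - d) <= Qp y d t.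
Proof.
move=> t0; have t1 : 0 < 1 + t by rewrite addr_gt0.
have a0 : 0 <= t / (1 + t) by rewrite divr_ge0 // ltW.
have a1 : t / (1 + t) <= 1 by rewrite ler_pdivrMr // mul1r lerDr ler01.
have := cphi (y - d) (y + t *: d) a0 a1.
have -> : t / (1 + t) *: (y - d) + (1 - t / (1 + t)) *: (y + t *: d) = y.
  by apply/matrixP => i j; rewrite !mxE; field; rewrite gt_eqF.
move=> h; rewrite /Qp ler_pdivlMr //.
have : (1 + t) * phi y <= (1 + t) * (t / (1 + t) * phi (y - d) + (1 - t / (1 + t)) * phi (y + t *: d)).
  by rewrite ler_pM2l.
have -> : (1 + t) * (t / (1 + t) * phi (y - d) + (1 - t / (1 + t)) * phi (y + t *: d)) =
   t * phi (y - d) + phi (y + t *: d) by field; rewrite gt_eqF.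
lra.
Qed.

Lemma qset_has_inf y d : has_inf (qset y d).
Proof.
split; first by exists (Qp y d 1), 1 => //=; exact: ltr01.
exists (phi y - phi (y - d)) => r [t t0 <-]; exact: Qp_lb.
Qed.

Lemma inf_le_Qp y d t : 0 < t -> inf (qset y d) <= Qp y d t.
Proof. by move=> t0; apply: (ge_inf (qset_has_inf y d).2); exists t. Qed.

Lemma inf_near y d e : 0 < e -> exists t0, 0 < t0 /\ forall t, 0 < t -> t <= t0 -> Qp y d t < inf (qset y d) + e.
Proof.
move=> e0; have [r [t0 t00 <-] H] := inf_adherent e0 (qset_has_inf y d).
exists t0; split => // t t1 t2; exact: le_lt_trans (Qp_mono y d t1 t2) H.
Qed.

Lemma inf_ge y d c : (forall t, 0 < t -> c <= Qp y d t) -> c <= inf (qset y d).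
Proof.
move=> H; apply: lb_le_inf; first exact: (qset_has_inf y d).1.
by move=> r [t t0 <-]; exact: H.
Qed.


Lemma le_eps (a b : R) : (forall e, 0 < e -> a <= b + e) -> a <= b.
Proof.
move=> H; rewrite leNgt; apply/negP => ba.
have := H ((a - b) / 2); rewrite divr_gt0 ?subr_gt0 // => /(_ isT) h.
have : (a - b) / 2 < a - b by rewrite ltr_pdivrMr // ltr_pMr ?subr_gt0 // ltr1n.
lra.
Qed.

Variable gradf : vec -> vec.
Definition Dv (y d : vec) := dotv (gradf y) d + inf (qset y d).

Lemma Dv0 y : Dv y 0 = 0.
Proof.
have Q0 : forall t, Qp y 0 t = 0 by move=> t; rewrite /Qp scaler0 addr0 subrr mul0r.
have h1 : inf (qset y 0) <= 0 by rewrite -(Q0 1); apply: inf_le_Qp; exact: ltr01.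
have h2 : 0 <= inf (qset y 0) by apply: inf_ge => t _; rewrite Q0.
by rewrite /Dv dotv0r add0r; apply/eqP; rewrite eq_le h1 h2.
Qed.

Lemma Dv_homog y d c : 0 < c -> Dv y (c *: d) = c * Dv y d.
Proof.
move=> c0.
have QE : forall t, 0 < t -> Qp y (c *: d) t = c * Qp y d (c * t).
  move=> t t0; rewrite /Qp scalerA (mulrC t c).
  by field; apply/andP; split; rewrite gt_eqF // mulr_gt0.
have h1 : c * inf (qset y d) <= inf (qset y (c *: d)).
  apply: inf_ge => t t0; rewrite QE // ler_pM2l //; apply: inf_le_Qp.
  by rewrite mulr_gt0.
have h2 : inf (qset y (c *: d)) / c <= inf (qset y d).
  apply: inf_ge => t t0; rewrite ler_pdivrMr // mulrC.
  have := inf_le_Qp y (c *: d) (divr_gt0 t0 c0); rewrite QE ?divr_gt0 //.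
  have -> : c * (t / c) = t by field; rewrite gt_eqF.
  by [].
have h3 : inf (qset y (c *: d)) <= c * inf (qset y d).
  by rewrite -ler_pdivrMl // mulrC.
rewrite /Dv dotvZr mulrDr; congr (_ + _); apply/eqP; rewrite eq_le h1 h3 //.
Qed.

Lemma Dv_convex y : convex_fun (Dv y).
Proof.
move=> a b l l0 l1.
rewrite /Dv dotvDr !dotvZr.
suff : inf (qset y (l *: a + (1 - l) *: b)) <= l * inf (qset y a) + (1 - l) * inf (qset y b).
  lra.
apply: le_eps => e e0.
have [ta [ta0 Ha]] := inf_near y a e0.
have [tb [tb0 Hb]] := inf_near y b e0.
pose t := Num.min ta tb.
have t0 : 0 < t by rewrite lt_min ta0 tb0.
have hta : t <= ta by rewrite ge_min lexx.
have htb : t <= tb by rewrite ge_min lexx orbT.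
have ha := Ha t t0 hta; have hb := Hb t t0 htb.
apply: le_trans (inf_le_Qp _ _ t0) _.
have hc := cphi (y + t *: a) (y + t *: b) l0 l1.
rewrite (_ : l *: (y + t *: a) + (1 - l) *: (y + t *: b) = y + t *: (l *: a + (1 - l) *: b)) in hc;
  last by apply/matrixP => i j; rewrite !mxE; ring.
have hm : Qp y (l *: a + (1 - l) *: b) t <= l * Qp y a t + (1 - l) * Qp y b t.
  rewrite /Qp ler_pdivrMr // mulrDl -!mulrA !mulVf ?gt_eqF // !mulr1.
  lra.
have l2 : 0 <= 1 - l by lra.
have := ler_wpM2l l0 (ltW ha); have := ler_wpM2l l2 (ltW hb).
lra.
Qed.

Lemma Dv_zero_subdiff y : subdiff_comp gradf phi y 0 -> forall d, 0 <= Dv y d.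
Proof.
move=> [v Hv Ev] d.
have vE : v = - gradf y by apply/eqP; rewrite -subr_eq0 opprK addrC Ev.
suff : - dotv (gradf y) d <= inf (qset y d) by rewrite /Dv; lra.
apply: inf_ge => t t0.
have := Hv (y + t *: d).
rewrite (_ : y + t *: d - y = t *: d); last by rewrite addrC addKr.
rewrite dotvZr vE dotvNl => h.
rewrite /Qp ler_pdivlMr //; lra.
Qed.


Variable f : vec -> R.
Hypothesis hgrad : forall x, is_gradient f x (gradf x).
Hypothesis gcont : vcontinuous gradf.

Lemma dirder_eq y d : dirder (f \+ phi) y d = Dv y d.
Proof.
rewrite /dirder; apply: cvg_lim; first exact: Rhausdorff.
apply/cvgrPdist_lt => e e0.
have e2 : 0 < e / 2 by rewrite divr_gt0.
have [t0 [t00 Ht0]] := inf_near y d e2.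
set E := enorm d.
have E0 : 0 <= E := enorm_ge0 _.
have K0 : 0 < E + 1 by rewrite ltr_pwDr.
have ep : 0 < e / 2 / (E + 1) by rewrite divr_gt0.
have [df [df0 Hf]] := hgrad y ep.
have dd : 0 < Num.min t0 (df / (E + 1)) by rewrite lt_min t00 divr_gt0.
near=> t.
have tpos : 0 < t by near: t; exact: nbhs_right_gt.
have td : t < Num.min t0 (df / (E + 1)) by near: t; exact: nbhs_right_lt.
move: td; rewrite lt_min => /andP[tt0 tdf].
have hq := Ht0 t tpos (ltW tt0).
have hq2 := inf_le_Qp y d tpos.
have hn : enorm (t *: d) < df.
  rewrite enormZ (ger0_norm (ltW tpos)) -/E.
  apply: le_lt_trans (_ : t * E <= t * (E + 1)) _; first by rewrite ler_pM2l // lerDl.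
  by rewrite -ltr_pdivlMr.
have := Hf _ hn; rewrite enormZ (ger0_norm (ltW tpos)) -/E dotvZr.
set F1 := f (y + t *: d) - f y => hf.
set G := dotv (gradf y) d.
have hF : F1 / t * t = F1 by rewrite divfK // gt_eqF.
have hQf : `|F1 / t - G| <= e / 2 / (E + 1) * E.
  rewrite -(ler_pM2l tpos) -(ger0_norm (ltW tpos)) -normrM (ger0_norm (ltW tpos)).
  by rewrite mulrBr mulrC hF; move: hf; rewrite mulrCA.
have hE : e / 2 / (E + 1) * E <= e / 2.
  rewrite mulrAC ler_pdivrMr // ler_pM2l //; lra.
have -> : (f \+ phi) (y + t *: d) - (f \+ phi) y = F1 + (phi (y + t *: d) - phi y).
  by rewrite /F1 /=; ring.
rewrite mulrDl -/(Qp y d t) /Dv -/G.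
move: hQf; rewrite ler_norml => /andP[h1 h2].
rewrite ltr_norml; apply/andP; split; lra.
Unshelve. all: by end_near.
Qed.

Lemma Dv_usc x d0 eta : 0 < eta -> exists delta, 0 < delta /\
  forall y, enorm (y - x) < delta -> Dv y d0 < Dv x d0 + eta.
Proof.
move=> eta0.
have e3 : 0 < eta / 3 by rewrite divr_gt0.
have [t0 [t00 Ht]] := inf_near x d0 e3.
have hx := Ht t0 t00 (lexx _).
have ep : 0 < eta / 3 * t0 / 2 by rewrite !divr_gt0 // mulr_gt0.
have [d1 [d10 H1]] := conv_econt cphi x ep.
have [d2 [d20 H2]] := conv_econt cphi (x + t0 *: d0) ep.
set E := enorm d0.
have E0 : 0 <= E := enorm_ge0 _.
have K0 : 0 < E + 1 by rewrite ltr_pwDr.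
have eg : 0 < eta / 3 / (E + 1) by rewrite divr_gt0.
have [d3 [d30 H3]] := gcont x eg.
exists (Num.min d1 (Num.min d2 d3)); split; first by rewrite !lt_min d10 d20 d30.
move=> y; rewrite !lt_min => /andP[y1 /andP[y2 y3]].
have h1 := H1 y y1.
have h2 : `|phi (y + t0 *: d0) - phi (x + t0 *: d0)| < eta / 3 * t0 / 2.
  by apply: H2; rewrite (_ : y + t0 *: d0 - (x + t0 *: d0) = y - x) // opprD addrACA subrr addr0.
have h3 := H3 y y3.
have hQ : Qp y d0 t0 - Qp x d0 t0 < eta / 3.
  rewrite /Qp -mulrBl ltr_pdivrMr //.
  move: h1 h2; rewrite !ltr_norml => /andP[a0 a1] /andP[a2 a3].
  have -> : eta / 3 * t0 = 2 * (eta / 3 * t0 / 2) by field.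
  lra.
have hG : dotv (gradf y) d0 - dotv (gradf x) d0 < eta / 3.
  rewrite -dotvBl; apply: le_lt_trans (CSr _ _) _.
  apply: le_lt_trans (_ : enorm (gradf y - gradf x) * E <= eta / 3 / (E + 1) * E) _.
    by apply: ler_wpM2r => //; exact: ltW.
  rewrite mulrAC ltr_pdivrMr // ltr_pM2l //; lra.
have hi := inf_le_Qp y d0 t00.
rewrite /Dv.
have -> : eta = eta / 3 + eta / 3 + eta / 3 by field.
lra.
Qed.


Lemma min_exists y : exists d : vec, enorm d <= 1 /\
  forall e, enorm e <= 1 -> dirder (f \+ phi) y d <= dirder (f \+ phi) y e.
Proof.
have ex0 : exists v : vec, (fun=> 0 : R) v <= 0 /\ enorm (v - 0) <= 1.
  by exists 0; rewrite subr0 enorm0; split => //; exact: ler01.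
have [d [[_ Hd] Hmin]] := evt (conv_econt (Dv_convex y)) (econt_const 0) ex0.
exists d; split; first by move: Hd; rewrite subr0.
move=> e He; rewrite !dirder_eq; apply: Hmin => //; by rewrite subr0.
Qed.

Lemma part_a : locally_bounded_away (g_steep f phi gradf).
Proof.
move=> x; rewrite /g_steep /dsteep.
case: asboolP => [_|H0]; first by rewrite scaler0 eqxx.
set d0 := xget 0 _.
have [Hd0 Hmin0] : enorm d0 <= 1 /\ forall e, enorm e <= 1 -> dirder (f \+ phi) x d0 <= dirder (f \+ phi) x e.
  exact: (xgetPex 0 (min_exists x)).
rewrite dirder_eq => g0.
set v0 := Dv x d0.
have v0le : v0 <= 0 by rewrite /v0 -(Dv0 x) -!dirder_eq; apply: Hmin0; rewrite enorm0.
have v0ne : v0 != 0 by apply/eqP => v00; move: g0; rewrite -/v0 v00 scale0r eqxx.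
have v0lt : v0 < 0 by rewrite lt_neqAle v0ne v0le.
have eta0 : 0 < - v0 / 2 by rewrite divr_gt0 // oppr_gt0.
have [dl [dl0 Hdl]] := Dv_usc x d0 eta0.
exists dl, (- v0 / 2); split => //; split => // y hy.
have hy' := Hdl y hy.
rewrite /g_steep /dsteep.
case: asboolP => [Hy|_].
  have := Dv_zero_subdiff Hy d0; rewrite -/v0 in hy'; lra.
set d1 := xget 0 _.
have [Hd1 Hmin1] : enorm d1 <= 1 /\ forall e, enorm e <= 1 -> dirder (f \+ phi) y d1 <= dirder (f \+ phi) y e.
  exact: (xgetPex 0 (min_exists y)).
rewrite dirder_eq.
set v := Dv y d1.
have hv : v <= Dv y d0 by rewrite /v -!dirder_eq; apply: Hmin1.
have vlt : v < v0 / 2 by rewrite -/v0 in hy'; lra.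
have d1ne : d1 != 0.
  by apply/eqP => d10; move: vlt; rewrite /v d10 Dv0; lra.
have en0 := enorm_gt0 d1ne.
have hc : v <= (enorm d1)^-1 * v.
  rewrite /v -Dv_homog ?invr_gt0 // -!dirder_eq; apply: Hmin1.
  by rewrite enorm_normalize.
have en1 : 1 <= enorm d1.
  have : ((enorm d1)^-1 - 1) * v >= 0 by rewrite mulrBl mul1r subr_ge0.
  have vn : v < 0 by lra.
  move=> hh; rewrite -invf_le1 //; nra.
rewrite enormZ ltr0_norm; last lra.
have : - v * 1 <= - v * enorm d1 by rewrite ler_wpM2l //; lra.
lra.
Qed.

End D.

Theorem lemma4p2 (R : realType) (n : nat) (f phi : 'cV[R]_n -> R)
  (gradf : 'cV[R]_n -> 'cV[R]_n) (L : 'M[R]_n) :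
  C1_with_gradient f gradf -> convex_fun phi -> sym_pos_def L ->
  locally_bounded_away (g_steep f phi gradf) /\
  locally_bounded_away (Fnat L phi gradf).
Proof.
move=> [hg gc] cphi spd; split.
- exact: (part_a cphi hg gc).
- exact: (part_b cphi spd gc).
Qed.
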